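(* Let $A$ be an eNTA with a single clock $x$, and let $\gamma = q_0\tau_1 q_1\tau_2\cdots\tau_n q_n$ be a reachable path of $A$. For $1\le i\le n$ let $T_i$ be the set of times at which the $i$-th transition $\tau_i$ is taken, over all runs along $\gamma$, and let $s_i^{\gamma} := \sup T_i - \inf T_i \in \mathbb{R}_{\ge 0}\cup\{\infty\}$. Let $d_i^{\gamma}$ be the feasible durations and $w_i^{\gamma}$ the trail widths defined in the context. Then for every $1\le i\le n$, $$ s_i^{\gamma} = w_{i-1}^{\gamma} + d_i^{\gamma}, $$ and $$ w_i^{\gamma} = \begin{cases} 0 & \text{if } i=0,\\ s_i^{\gamma} & \text{if } i>0 \text{ and } x \text{ is reset on } \tau_i,\\ w_{i-1}^{\gamma} & \text{otherwise.}\end{cases} $$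
   Context: **Automata.** An eNTA (non-deterministic timed automaton with silent transitions) is a tuple $A=(\mathcal{Q},q_0,\Sigma_\epsilon,\mathcal{C},\mathcal{T})$ with the following components. - $\mathcal{Q}$ is a finite set of locations and $q_0\in\mathcal Q$ is the initial location. - $\Sigma$ is a finite set of observable actions, and $\Sigma_\epsilon=\Sigma\cup\{\epsilon\}$, where $\epsilon$ is the silent action. - $\mathcal{C}$ is a finite set of clocks. - $\mathcal{T}$ is a finite set of transitions $(q,a,g,\mathcal{C}_{rst},q')$. Here $q,q'\in\mathcal Q$, $a\in\Sigma_\epsilon$, $\mathcal{C}_{rst}\subseteq\mathcal C$ is the set of clocks reset, and the guard $g$ is a finite conjunction of constraints $c\sim n$ with $c\in\mathcal C$, $\sim\in\{<,\le,=,\ge,>\}$ and $n\in\mathbb{N}_0$. **Valuations and runs.** A valuation is a map $v:\mathcal C\to\mathbb{R}_{\ge0}$. We write $(v+d)(c)=v(c)+d$, and $v[\mathcal C_{rst}]$ for the valuation that sets the clocks in $\mathcal C_{rst}$ to $0$ and leaves the others unchanged. A run is a finite sequence $$(q_0,\mathbf 0)\xrightarrow{d_1}(q_0,\mathbf 0+d_1)\xrightarrow{\tau_1}(q_1,v_1)\xrightarrow{d_2}\cdots\xrightarrow{\tau_k}(q_k,v_k),$$ where $d_i\ge0$, $\tau_i=(q_{i-1},a_i,g_i,\mathcal C_i,q_i)\in\mathcal T$, $v_0=\mathbf 0$, $v_{i-1}+d_i\models g_i$ and $v_i=(v_{i-1}+d_i)[\mathcal C_i]$. The transition $\tau_i$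 is taken at time $t_i=d_1+\cdots+d_i$. **Paths.** A path $\gamma=q_0\tau_1q_1\cdots\tau_nq_n$ is a sequence of transitions with $\tau_i$ going from $q_{i-1}$ to $q_i$. A run along $\gamma$ is a run whose transitions are exactly $\tau_1,\dots,\tau_n$ in this order, and $\gamma$ is reachable if some run along it exists. **Feasible durations $d_i^\gamma$.** Let $l_i^\gamma$ and $u_i^\gamma$ be the lower and upper bounds imposed on $x$ by the guard of $\tau_i$, with $l_i^\gamma=u_i^\gamma$ for an equality constraint, $l_i^\gamma=0$ if there is no lower bound, and $u_i^\gamma=\infty$ if there is no upper bound. 1. Forward adjustment: for $i=1,\dots,n-1$ in increasing order, if $x$ is not reset on $\tau_i$ and $l_{i+1}^\gamma<l_i^\gamma$, set $l_{i+1}^\gamma:=l_i^\gamma$. 2. Backward adjustment: for $i=n-1,\dots,1$ in decreasing order, if $x$ is not reset on $\tau_i$ and $u_i^\gamma>u_{i+1}^\gamma$, set $u_i^\gamma:=u_{i+1}^\gamma$. 3. Define $d_i^\gamma:=\max\{u_i^\gamma-l_i^\gamma,0\}$. **Trail widths $w_i^\gamma$.** The trail of $\gamma$ is the set of all points $(t,x)$ visited by the runs along $\gamma$, where $t$ is the global elapsed time. For $0\le i\le n$, $w_i^\gamma$ is the width of the trail after the $i$-th transition. Concretely, let $j\le i$ be the largest index such that $x$ is reset on $\tau_j$. If such a $j$ exists, $w_i^\gamma:=s_j^\gamma$, the length of the set of times at which $x$ was last reset. If no such $j$ exists (so $x$ was last set to $0$ at time $0$), $w_i^\gamma:=0$.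 *)

(* Defs.v *)
From Stdlib Require Import Reals Lra Lia Arith List ClassicalEpsilon.
Import ListNotations.
Open Scope R_scope.

(** * Single-clock eNTA.  The unique clock is called x; guards are
    conjunctions of constraints [x ~ n] with n a natural number. *)

Inductive cmp := CLt | CLe | CEq | CGe | CGt.

Record constr := Constr { c_op : cmp; c_bound : nat }.

Definition constr_sat (c : constr) (v : R) : Prop :=
  let n := INR (c_bound c) in
  match c_op c with
  | CLt => v < n | CLe => v <= n | CEq => v = n | CGe => v >= n | CGt => v > n
  end.

Definition guard := list constr.

Definition guard_sat (g : guard) (v : R) : Prop :=
  Forall (fun c => constr_sat c v) g.

(** A transition (q, a, g, C_rst, q'); [a = None] is the silent action ε;
    since there is a single clock, C_rst ⊆ {x} is a boolean ([true] = x reset). *)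
Record transition (Q Sig : Type) := Trans {
  t_src : Q; t_act : option Sig; t_guard : guard; t_rst : bool; t_tgt : Q }.
Arguments Trans {Q Sig}.
Arguments t_src {Q Sig}. Arguments t_act {Q Sig}. Arguments t_guard {Q Sig}.
Arguments t_rst {Q Sig}. Arguments t_tgt {Q Sig}.

(** An eNTA with the single clock x; finite sets are given as lists. *)
Record eNTA (Q Sig : Type) := MkENTA {
  locs : list Q; init : Q; acts : list Sig; trans : list (transition Q Sig) }.
Arguments locs {Q Sig}. Arguments init {Q Sig}.
Arguments acts {Q Sig}. Arguments trans {Q Sig}.

Definition wf_eNTA {Q Sig} (A : eNTA Q Sig) : Prop :=
  In (init A) (locs A) /\
  Forall (fun t => In (t_src t) (locs A) /\ In (t_tgt t) (locs A) /\
                   match t_act t with Some a => In a (acts A) | None => True end)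
         (trans A).

(** Paths q0 τ1 q1 ... τn qn, represented by the list [τ1; ...; τn]. *)
Fixpoint chain_from {Q Sig} (q : Q) (g : list (transition Q Sig)) : Prop :=
  match g with
  | [] => True
  | t :: g' => t_src t = q /\ chain_from (t_tgt t) g'
  end.

Definition is_path {Q Sig} (A : eNTA Q Sig) (g : list (transition Q Sig)) : Prop :=
  Forall (fun t => In t (trans A)) g /\ chain_from (init A) g.

(** [run_along v t g tms]: starting in valuation [v] at global time [t],
    the transitions of [g] are taken in order at the global times [tms]
    (delays t' - t >= 0, guard checked on v + delay, then reset applied). *)
Fixpoint run_along {Q Sig} (v t : R) (g : list (transition Q Sig)) (tms : list R)
  : Prop :=
  match g, tms with
  | [], [] => True
  | tr :: g', t' :: tms' =>
      t <= t' /\ guard_sat (t_guard tr) (v + (t' - t)) /\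
      run_along (if t_rst tr then 0 else v + (t' - t)) t' g' tms'
  | _, _ => False
  end.

Definition is_run_along {Q Sig} (g : list (transition Q Sig)) (tms : list R) : Prop :=
  run_along 0 0 g tms.

Definition reachable {Q Sig} (g : list (transition Q Sig)) : Prop :=
  exists tms, is_run_along g tms.

(** T_i : times at which τ_i (1 <= i <= n) is taken, over all runs along g. *)
Definition T_set {Q Sig} (g : list (transition Q Sig)) (i : nat) (t : R) : Prop :=
  exists tms, is_run_along g tms /\ nth (i - 1) tms 0 = t.

(** Extended nonnegative reals: [None] = ∞. *)
Definition is_lower_bound (E : R -> Prop) (m : R) : Prop := forall x, E x -> m <= x.
Definition is_glb (E : R -> Prop) (m : R) : Prop :=
  is_lower_bound E m /\ forall b, is_lower_bound E b -> b <= m.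

Definition sup_val (E : R -> Prop) : R := epsilon (inhabits 0) (fun M => is_lub E M).
Definition inf_val (E : R -> Prop) : R := epsilon (inhabits 0) (fun m => is_glb E m).

Definition set_width (E : R -> Prop) : option R :=
  if excluded_middle_informative (bound E) then Some (sup_val E - inf_val E)
  else None.

Definition s_gamma {Q Sig} (g : list (transition Q Sig)) (i : nat) : option R :=
  set_width (T_set g i).

Definition c_lower (c : constr) : nat :=
  match c_op c with CEq | CGe | CGt => c_bound c | _ => 0%nat end.
Definition c_upper (c : constr) : option nat :=
  match c_op c with CEq | CLe | CLt => Some (c_bound c) | _ => None end.

Definition omin (a b : option nat) : option nat :=
  match a, b with
  | None, _ => b | _, None => a | Some x, Some y => Some (Nat.min x y) end.

Definition g_lower (g : guard) : nat := fold_right (fun c l => Nat.max (c_lower c) l) 0%nat g.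
Definition g_upper (g : guard) : option nat := fold_right (fun c u => omin (c_upper c) u) None g.

(** Forward adjustment: l_{i+1} := max(l_{i+1}, l_i) if x not reset on τ_i
    (processed in increasing order; [c] carries the adjusted l_i, or 0). *)
Fixpoint fwd_lower {Q Sig} (c : nat) (g : list (transition Q Sig)) : list nat :=
  match g with
  | [] => []
  | t :: g' => let l := Nat.max c (g_lower (t_guard t)) in
               l :: fwd_lower (if t_rst t then 0%nat else l) g'
  end.

(** Backward adjustment: u_i := min(u_i, u_{i+1}) if x not reset on τ_i
    (processed in decreasing order, using the adjusted u_{i+1}). *)
Fixpoint bwd_upper {Q Sig} (g : list (transition Q Sig)) : list (option nat) :=
  match g with
  | [] => []
  | t :: g' =>
      let r := bwd_upper g' in
      let u := g_upper (t_guard t) in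
      (match r with
       | [] => u
       | u' :: _ => if t_rst t then u else omin u u'
       end) :: r
  end.

(** d_i^γ = max(u_i - l_i, 0) for 1 <= i <= n ([None] = ∞). *)
Definition d_gamma {Q Sig} (g : list (transition Q Sig)) (i : nat) : option nat :=
  let l := nth (i - 1) (fwd_lower 0%nat g) 0%nat in
  match nth (i - 1) (bwd_upper g) None with
  | None => None
  | Some u => Some (u - l)%nat
  end.

Definition reset_at {Q Sig} (g : list (transition Q Sig)) (i : nat) : bool :=
  match i with
  | O => false
  | S k => match nth_error g k with Some t => t_rst t | None => false end
  end.

Fixpoint last_reset {Q Sig} (g : list (transition Q Sig)) (i : nat) : option nat :=
  match i with
  | O => None
  | S k => if reset_at g (S k) then Some (S k) else last_reset g k
  end.

Definition w_gamma {Q Sig} (g : list (transition Q Sig)) (i : nat) : option R :=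
  match last_reset g i with
  | Some j => s_gamma g j
  | None => Some 0
  end.

Definition eadd (a : option R) (b : option nat) : option R :=
  match a, b with
  | Some x, Some y => Some (x + INR y)
  | _, _ => None
  end.

(* Main.v *)
Require Import Defs.
From Stdlib Require Import Reals Arith List Lra Lia ClassicalEpsilon.
Import ListNotations.
Open Scope R_scope.

Ltac rmx := unfold Rmax, Rmin in *;
  repeat match goal with
  | |- context [Rle_dec ?a ?b] => destruct (Rle_dec a b)
  | H: context [Rle_dec ?a ?b] |- _ => destruct (Rle_dec a b)
  end; try lra.

Definition ubd (ob : option R) (x : R) : Prop :=
  match ob with Some b => x <= b | None => True end.
Definition ltb (ob : option R) (x : R) : Prop :=
  match ob with Some b => x < b | None => True end.
Definition oaddR (a b : option R) : option R :=
  match a, b with Some x, Some y => Some (x + y) | _, _ => None end.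
Definition ominR (a b : option R) : option R :=
  match a, b with None, _ => b | _, None => a | Some x, Some y => Some (Rmin x y) end.

Definition IL (E : R -> Prop) (a : R) (ob : option R) : Prop :=
  (exists x, E x) /\ (forall x, E x -> a <= x /\ ubd ob x) /\
  (forall x, a < x -> ltb ob x -> E x).

Lemma ubd_ltb ob e t : ubd ob e -> t < e -> ltb ob t.
Proof. destruct ob; simpl; lra. Qed.

Lemma ubd_down ob e t : ubd ob e -> t <= e -> ubd ob t.
Proof. destruct ob; simpl; lra. Qed.

Lemma IL_ext E E' a ob : (forall x, E x <-> E' x) -> IL E a ob -> IL E' a ob.
Proof.
  intros Hx [[e He] [C I]]. split; [exists e; apply Hx; auto|split].
  - intros x H. apply C, Hx, H.
  - intros x H1 H2. apply Hx, I; auto.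
Qed.

Lemma IL_below E a ob y : IL E a ob -> a < y -> exists t, E t /\ t < y.
Proof.
  intros [[e He] [C I]] Hy. destruct (Rlt_or_le e y) as [H|H].
  - eauto.
  - exists ((a+y)/2). destruct (C e He). split; [|lra].
    apply I; [lra|]. eapply ubd_ltb; eauto. lra.
Qed.

Lemma IL_above E a ob t : IL E a ob -> ltb ob t -> exists y, E y /\ t <= y.
Proof.
  intros [[e He] [C I]] Ht. destruct (Rle_or_lt t e) as [H|H].
  - eauto.
  - destruct (C e He) as [H1 H2]. destruct ob as [b|]; simpl in *.
    + exists ((t+b)/2). split; [apply I; simpl; lra|lra].
    + exists (t+1). split; [apply I; simpl; auto; lra|lra].
Qed.

Lemma IL_sum A B a b oa ob : IL A a oa -> IL B b ob ->
  IL (fun x => exists p q, A p /\ B q /\ x = p + q) (a+b) (oaddR oa ob).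
Proof.
  intros HA HB. pose proof HA as [[ea Ea] [Ca Ia]]. pose proof HB as [[eb Eb] [Cb Ib]].
  split; [|split].
  - exists (ea+eb), ea, eb; auto.
  - intros x [p [q [Ap [Bq ->]]]]. destruct (Ca p Ap), (Cb q Bq). split; [lra|].
    destruct oa, ob; simpl in *; auto; lra.
  - intros x Hx Hlt. destruct ob as [be|].
    + destruct oa as [al|].
      * simpl in Hlt. destruct (Cb eb Eb) as [Hb1 Hb2]. destruct (Ca ea Ea) as [Ha1 Ha2].
        simpl in Hb2, Ha2.
        destruct (Rle_lt_or_eq_dec b be) as [Hbb|Hbb]; [lra| |].
        -- destruct (Rle_lt_or_eq_dec a al) as [Haa|Haa]; [lra| |].
           ++ set (p := (Rmax a (x-be) + Rmin al (x-b))/2).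
              assert (Rmax a (x-be) < Rmin al (x-b)) by rmx.
              assert (a < p /\ p < al /\ x - be < p /\ p < x - b) by (unfold p; rmx).
              exists p, (x - p). split; [apply Ia; simpl; lra|]. split; [apply Ib; simpl; lra|]. ring.
           ++ exists ea, (x - ea). split; auto. split; [apply Ib; simpl; lra|]. ring.
        -- exists (x - eb), eb. split; [apply Ia; simpl; lra|]. split; auto. ring.
      * destruct (IL_below _ _ _ (x - a) HB) as [q [Bq Hq]]; [lra|].
        exists (x - q), q. split; [apply Ia; simpl; auto; lra|]. split; auto. ring.
    + destruct (IL_below _ _ _ (x - b) HA) as [p [Ap Hp]]; [lra|].
      exists p, (x - p). split; auto. split; [apply Ib; simpl; auto; lra|]. ring.
Qed.

Lemma IL_union (T0 : R -> Prop) a0 ob0 (F : R -> R -> Prop) (f : R -> R) al be ob :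
  IL T0 a0 ob0 -> (forall t, T0 t -> IL (F t) (f t) ob) ->
  (forall t, f t = Rmax t al + be) ->
  IL (fun x => exists t, T0 t /\ F t x) (f a0) ob.
Proof.
  intros H0 HF Hf. pose proof H0 as [[e0 E0] [C0 I0]]. split; [|split].
  - destruct (HF e0 E0) as [[x Hx] _]. eauto.
  - intros x [t [Tt Ft]]. destruct (HF t Tt) as [_ [C _]]. destruct (C x Ft).
    destruct (C0 t Tt). split; auto. rewrite Hf in *. rmx.
  - intros x Hx Hl. rewrite Hf in Hx.
    destruct (IL_below _ _ _ (x - be) H0) as [t [Tt Ht]]; [rmx|].
    exists t. split; auto. destruct (HF t Tt) as [_ [_ I]]. apply I; auto.
    rewrite Hf. rmx.
Qed.

Lemma IL_width E a ob : IL E a ob -> set_width E = option_map (fun b => b - a) ob.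
Proof.
  intros [[e He] [C I]]. unfold set_width.
  destruct (excluded_middle_informative (bound E)) as [Hb|Hb].
  - destruct ob as [b|].
    + simpl. assert (Hl : is_lub E b).
      { split. intros x Hx; apply (C x Hx).
        intros M HM. destruct (Rle_or_lt b M); auto. exfalso.
        assert (e <= M) by (apply HM; auto). destruct (C e He).
        assert (E ((M+b)/2)) by (apply I; simpl; lra). assert ((M+b)/2 <= M) by (apply HM; auto). lra. }
      assert (Hg : is_glb E a).
      { split. intros x Hx; apply (C x Hx).
        intros m Hm. destruct (Rle_or_lt m a); auto. exfalso.
        assert (m <= e) by (apply Hm; auto). destruct (C e He). simpl in *.
        assert (E ((a+m)/2)) by (apply I; simpl; lra). assert (m <= (a+m)/2) by (apply Hm; auto). lra. }
      assert (Hs : is_lub E (sup_val E)) by (unfold sup_val, inf_val; apply epsilon_spec; eauto).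
      assert (Hi : is_glb E (inf_val E)) by (unfold sup_val, inf_val; apply epsilon_spec; eauto).
      f_equal. destruct Hl as [Hl1 Hl2], Hs as [Hs1 Hs2], Hg as [Hg1 Hg2], Hi as [Hi1 Hi2].
      assert (sup_val E = b) by (apply Rle_antisym; auto).
      assert (inf_val E = a) by (apply Rle_antisym; auto). lra.
    + exfalso. destruct Hb as [M HM]. destruct (C e He).
      assert (E (Rmax a M + 1)) by (apply I; simpl; auto; rmx).
      assert (Rmax a M + 1 <= M) by (apply HM; auto). rmx.
  - destruct ob as [b|]; simpl; auto. exfalso. apply Hb. exists b. intros x Hx. apply (C x Hx).
Qed.
Lemma INR_max a b : INR (Nat.max a b) = Rmax (INR a) (INR b).
Proof.
  destruct (Nat.le_ge_cases a b) as [H|H].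
  - rewrite Nat.max_r by auto. apply le_INR in H. rmx.
  - rewrite Nat.max_l by auto. apply le_INR in H. rmx.
Qed.

Lemma INR_min a b : INR (Nat.min a b) = Rmin (INR a) (INR b).
Proof.
  destruct (Nat.le_ge_cases a b) as [H|H].
  - rewrite Nat.min_l by auto. apply le_INR in H. rmx.
  - rewrite Nat.min_r by auto. apply le_INR in H. rmx.
Qed.

Lemma omin_INR a b : option_map INR (omin a b) = ominR (option_map INR a) (option_map INR b).
Proof. destruct a, b; simpl; auto. rewrite INR_min; auto. Qed.

Lemma ubd_omin a b x : ubd (ominR a b) x <-> ubd a x /\ ubd b x.
Proof. destruct a, b; simpl; try tauto. split; [intros; rmx| intros [? ?]; rmx]. Qed.

Lemma ltb_omin a b x : ltb (ominR a b) x <-> ltb a x /\ ltb b x.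
Proof. destruct a, b; simpl; try tauto. split; [intros; rmx| intros [? ?]; rmx]. Qed.

Lemma guard_bounds gd x : 0 <= x -> guard_sat gd x ->
  INR (g_lower gd) <= x /\ ubd (option_map INR (g_upper gd)) x.
Proof.
  intros Hx. induction gd as [|c gd IH]; intros H.
  - simpl; split; try lra; exact I.
  - inversion H; subst. destruct (IH H3) as [H4 H5]. simpl.
    rewrite INR_max, omin_INR, ubd_omin. unfold constr_sat in H2.
    destruct c as [op n]; destruct op; unfold c_lower, c_upper; simpl in *;
      (split; [rmx|split; simpl; auto; lra]).
Qed.

Lemma guard_int gd x : INR (g_lower gd) < x -> ltb (option_map INR (g_upper gd)) x ->
  guard_sat gd x.
Proof.
  induction gd as [|c gd IH]; intros H1 H2.
  - constructor.
  - simpl in H1, H2. rewrite INR_max in H1. rewrite omin_INR, ltb_omin in H2.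
    destruct H2 as [H2 H3]. constructor.
    + unfold constr_sat. destruct c as [op n]; destruct op; unfold c_lower, c_upper in *; simpl in *; rmx.
    + apply IH; auto. rmx.
Qed.

Section Runs.
Context {Q Sig : Type}.
Notation trans := (transition Q Sig).

Lemma run_len (g : list trans) v t tms : run_along v t g tms -> length tms = length g.
Proof.
  revert v t tms. induction g; intros v t tms; destruct tms; simpl; try tauto.
  intros [_ [_ H]]. f_equal. eapply IHg; eauto.
Qed.

Lemma run_shift (g : list trans) v t tms c : run_along v t g tms ->
  run_along v (t + c) g (map (fun s => s + c) tms).
Proof.
  revert v t tms. induction g; intros v t tms; destruct tms; simpl; try tauto.
  intros [H1 [H2 H3]]. replace (r + c - (t + c)) with (r - t) by ring.
  split; [lra|split; auto].
Qed.

Lemma run_reset_iff (g : list trans) t1 tms : run_along 0 t1 g tms <->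
  exists tms0, run_along 0 0 g tms0 /\ tms = map (fun s => s + t1) tms0.
Proof.
  split.
  - intros H. exists (map (fun s => s + - t1) tms). split.
    + pose proof (run_shift g 0 t1 tms (- t1) H) as H'. rewrite Rplus_opp_r in H'. exact H'.
    + rewrite map_map. rewrite <- (map_id tms) at 1. apply map_ext. intros; ring.
  - intros [tms0 [H ->]]. pose proof (run_shift g 0 0 tms0 t1 H) as H'.
    rewrite Rplus_0_l in H'. exact H'.
Qed.

Lemma nth_map_shift (l : list R) k c : (k < length l)%nat ->
  nth k (map (fun s => s + c) l) 0 = nth k l 0 + c.
Proof.
  intros Hk. rewrite (nth_indep _ 0 (0 + c)) by (rewrite length_map; auto).
  rewrite (map_nth (fun s => s + c)). reflexivity.
Qed.

Lemma run_down (g : list trans) tms v v' : run_along v v g tms -> v' <= v ->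
  run_along v' v' g tms.
Proof.
  destruct g as [|tr g], tms as [|y tms]; simpl; try tauto.
  rewrite !Rplus_minus. intros [H1 [H2 H3]] H. split; [lra|auto].
Qed.

Definition reach (g : list trans) v := exists tms, run_along v v g tms.
Definition TT (g : list trans) v k x := exists tms, run_along v v g tms /\ nth k tms 0 = x.

Lemma TT_cons0 (tr : trans) g v x : TT (tr::g) v 0 x <->
  v <= x /\ guard_sat (t_guard tr) x /\
  exists tms, run_along (if t_rst tr then 0 else x) x g tms.
Proof.
  split.
  - intros [tms [H Hn]]. destruct tms as [|t1 tms]; simpl in H; [contradiction|].
    simpl in Hn; subst. rewrite Rplus_minus in H. destruct H as [H1 [H2 H3]]. eauto.
  - intros [H1 [H2 [tms H3]]]. exists (x :: tms). simpl. rewrite Rplus_minus. auto.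
Qed.

Lemma TT_consS (tr : trans) g v k x : TT (tr::g) v (S k) x <->
  exists t1, TT (tr::g) v 0 t1 /\
   exists tms, run_along (if t_rst tr then 0 else t1) t1 g tms /\ nth k tms 0 = x.
Proof.
  split.
  - intros [tms [H Hn]]. destruct tms as [|t1 tms]; simpl in H; [contradiction|].
    simpl in Hn. rewrite Rplus_minus in H. destruct H as [H1 [H2 H3]].
    exists t1. split; [apply TT_cons0; eauto|eauto].
  - intros [t1 [H0 [tms [H3 Hn]]]]. apply TT_cons0 in H0. destruct H0 as [H1 [H2 _]].
    exists (t1 :: tms). simpl. rewrite Rplus_minus. auto.
Qed.

Fixpoint loB (v : R) (g : list trans) (i : nat) : R :=
  match g with
  | [] => Rmax v 0
  | tr :: g' =>
    let l0 := Rmax v (INR (g_lower (t_guard tr))) in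
    match i with
    | O => l0
    | S i' => if t_rst tr then l0 + loB 0 g' i' else loB l0 g' i'
    end
  end.

Fixpoint upB (g : list trans) (i : nat) : option R :=
  match g with
  | [] => None
  | tr :: g' =>
    let gu := option_map INR (g_upper (t_guard tr)) in
    let u0 := if t_rst tr then gu else ominR gu (upB g' 0) in
    match i with
    | O => u0
    | S i' => if t_rst tr then oaddR u0 (upB g' i') else upB g' i'
    end
  end.

Lemma lo_form (g : list trans) i : exists al be, forall t, loB t g i = Rmax t al + be.
Proof.
  revert i. induction g as [|tr g IH]; intros i.
  - exists 0, 0. intros; simpl; ring.
  - destruct i as [|i].
    + exists (INR (g_lower (t_guard tr))), 0. intros; simpl; ring.
    + simpl. destruct (t_rst tr).
      * exists (INR (g_lower (t_guard tr))), (loB 0 g i). auto.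
      * destruct (IH i) as [al [be H]]. exists (Rmax (INR (g_lower (t_guard tr))) al), be.
        intros t. rewrite H. f_equal. rmx.
Qed.

Lemma reach_ub (g : list trans) :
  (forall v, 0 <= v -> reach g v -> (0 < length g)%nat -> IL (TT g v 0) (loB v g 0) (upB g 0)) ->
  forall t, 0 <= t -> reach g t -> ubd (upB g 0) t.
Proof.
  intros HIL t Ht Hr. destruct g as [|tr g]; [simpl; auto|].
  destruct Hr as [tms Hr]. destruct tms as [|y tms]; [simpl in Hr; contradiction|].
  assert (HT : TT (tr::g) t 0 y) by (exists (y::tms); auto).
  destruct (HIL t Ht (ex_intro _ _ Hr)) as [_ [C _]]; [simpl; lia|].
  destruct (C y HT) as [_ H]. simpl in Hr. destruct Hr as [Hty _].
  eapply ubd_down; eauto.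
Qed.

Lemma reach_int (g : list trans) :
  (forall v, 0 <= v -> reach g v -> (0 < length g)%nat -> IL (TT g v 0) (loB v g 0) (upB g 0)) ->
  forall ts t, 0 <= ts -> reach g ts -> ltb (upB g 0) t -> reach g t.
Proof.
  intros HIL ts t Hts Hr Hl. destruct g as [|tr g]; [exists []; simpl; auto|].
  destruct (IL_above _ _ _ t (HIL ts Hts Hr ltac:(simpl; lia)) Hl) as [y [[tms [H Hn]] Hy]].
  exists tms. destruct tms as [|y' tms]; [simpl in H; contradiction|]. simpl in Hn. subst y'.
  simpl in *. rewrite Rplus_minus in *. intuition lra.
Qed.

Theorem IL_main (g : list trans) : forall k v, 0 <= v -> (k < length g)%nat -> reach g v ->
  IL (TT g v k) (loB v g k) (upB g k).
Proof.
  induction g as [|tr g IH]; intros k v Hv Hk Hr; [simpl in Hk; lia|].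
  assert (R1 := reach_ub g (fun v Hv Hr Hl => IH 0%nat v Hv Hl Hr)).
  assert (R2 := reach_int g (fun v Hv Hr Hl => IH 0%nat v Hv Hl Hr)).
  destruct Hr as [[|t1 tms] Hr]; [simpl in Hr; contradiction|].
  assert (Ht1 : TT (tr::g) v 0 t1) by (exists (t1::tms); auto).
  simpl in Hr. rewrite Rplus_minus in Hr. destruct Hr as [Hvt [Hg Hrest]].
  assert (H0 : IL (TT (tr::g) v 0) (loB v (tr::g) 0) (upB (tr::g) 0)).
  { simpl. destruct (t_rst tr) eqn:Hrs; try rewrite Hrs in Hrest.
    - destruct (proj1 (run_reset_iff g t1 tms) Hrest) as [tms0 [Hr0 _]].
      split; [eauto|split].
      + intros x Hx. apply TT_cons0 in Hx. destruct Hx as [H1 [H2 _]].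
        destruct (guard_bounds _ x ltac:(lra) H2). split; [rmx|auto].
      + intros x Hx Hl. apply TT_cons0. rewrite Hrs.
        split; [rmx|split].
        * apply guard_int; auto. rmx.
        * exists (map (fun s => s + x) tms0). apply run_reset_iff. eauto.
    - split; [eauto|split].
      + intros x Hx. apply TT_cons0 in Hx. rewrite Hrs in Hx. destruct Hx as [H1 [H2 H3]].
        destruct (guard_bounds _ x ltac:(lra) H2). split; [rmx|].
        apply ubd_omin. split; auto. apply R1; auto; lra.
      + intros x Hx Hl. apply ltb_omin in Hl. destruct Hl as [Hl1 Hl2].
        apply TT_cons0. rewrite Hrs.
        split; [rmx|split].
        * apply guard_int; auto. rmx.
        * apply (R2 t1); auto; [lra|exists tms; auto]. }
  destruct k as [|k]; [exact H0|]. simpl in Hk.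
  assert (Hk' : (k < length g)%nat) by lia.
  simpl. destruct (t_rst tr) eqn:Hrs; try rewrite Hrs in Hrest.
  - destruct (proj1 (run_reset_iff g t1 tms) Hrest) as [tms0 [Hr0 _]].
    assert (HB := IH k 0 (Rle_refl 0) Hk' (ex_intro _ _ Hr0)).
    simpl in H0. rewrite Hrs in H0.
    eapply IL_ext; [|exact (IL_sum _ _ _ _ _ _ H0 HB)].
    intros x. rewrite TT_consS, Hrs. split.
    + intros [p [q [Ap [[tq [Bq Hq]] Hx]]]]. exists p. split; auto.
      exists (map (fun s => s + p) tq). split.
      * apply run_reset_iff. eauto.
      * rewrite nth_map_shift; [lra|]. rewrite (run_len _ _ _ _ Bq). auto.
    + intros [p [Ap [tq [Hq Hx]]]]. apply run_reset_iff in Hq.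
      destruct Hq as [tq0 [Hq0 ->]]. exists p, (nth k tq0 0). split; auto.
      split; [exists tq0; auto|].
      rewrite nth_map_shift in Hx; [lra|]. rewrite (run_len _ _ _ _ Hq0). auto.
  - destruct (lo_form g k) as [al [be Hf]].
    simpl in H0. rewrite Hrs in H0.
    eapply IL_ext; [|refine (IL_union _ _ _ (fun t => TT g t k) (fun t => loB t g k) al be _ H0 _ Hf)].
    + intros x. rewrite TT_consS, Hrs. reflexivity.
    + intros t Tt. apply TT_cons0 in Tt. rewrite Hrs in Tt. destruct Tt as [H1 [H2 H3]].
      apply IH; auto. lra.
Qed.

Lemma up0_bwd (g : list trans) : upB g 0 = option_map INR (nth 0 (bwd_upper g) None).
Proof.
  induction g as [|tr g IH]; [reflexivity|].
  simpl. destruct (bwd_upper g) as [|u r]; simpl in IH; rewrite IH.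
  - destruct (t_rst tr), (g_upper (t_guard tr)); reflexivity.
  - destruct (t_rst tr); auto. rewrite omin_INR. reflexivity.
Qed.

Lemma last_reset_cons (tr : trans) g k :
  last_reset (tr::g) (S k) =
  match last_reset g k with Some j => Some (S j) | None => if t_rst tr then Some 1%nat else None end.
Proof.
  induction k as [|k IH]; [reflexivity|].
  change (last_reset (tr :: g) (S (S k))) with
    (if reset_at (tr::g) (S (S k)) then Some (S (S k)) else last_reset (tr::g) (S k)).
  change (reset_at (tr::g) (S (S k))) with (reset_at g (S k)).
  change (last_reset g (S k)) with (if reset_at g (S k) then Some (S k) else last_reset g k).
  destruct (reset_at g (S k)); auto.
Qed.

Lemma last_reset_range (g : list trans) k j : last_reset g k = Some j -> (1 <= j <= k)%nat.
Proof.
  induction k as [|k IH]; intros H; [discriminate|].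
  change (last_reset g (S k)) with (if reset_at g (S k) then Some (S k) else last_reset g k) in H.
  destruct (reset_at g (S k)); [injection H; lia|]. specialize (IH H); lia.
Qed.

Definition Wd (g : list trans) c k := option_map (fun b => b - loB (INR c) g k) (upB g k).
Definition dd (g : list trans) c k : option nat :=
  match nth k (bwd_upper g) None with
  | None => None
  | Some u => Some (u - nth k (fwd_lower c g) 0)%nat
  end.

Lemma Claim (g : list trans) : forall c k, reach g (INR c) -> (k < length g)%nat ->
  Wd g c k = eadd (match last_reset g k with Some j => Wd g c (j - 1) | None => Some 0 end)
                  (dd g c k).
Proof.
  induction g as [|tr g IH]; intros c k Hr Hk; [simpl in Hk; lia|].
  assert (HIL0 := IL_main (tr::g) 0 (INR c) (pos_INR c) ltac:(simpl; lia) Hr).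
  destruct Hr as [[|t1 tms] Hr]; [simpl in Hr; contradiction|].
  simpl in Hr. rewrite Rplus_minus in Hr. destruct Hr as [Hvt [Hg Hrest]].
  destruct k as [|k].
  - simpl last_reset. unfold Wd, dd. rewrite up0_bwd.
    change (loB (INR c) (tr :: g) 0) with (Rmax (INR c) (INR (g_lower (t_guard tr)))).
    change (nth 0 (fwd_lower c (tr :: g)) 0%nat) with (Nat.max c (g_lower (t_guard tr))).
    rewrite up0_bwd in HIL0. destruct (nth 0 (bwd_upper (tr :: g)) None) as [u|]; [|reflexivity].
    simpl. f_equal. destruct HIL0 as [[e He] [C _]]. destruct (C e He) as [H1 H2]. simpl in H1, H2.
    change (loB (INR c) (tr :: g) 0) with (Rmax (INR c) (INR (g_lower (t_guard tr)))) in H1.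
    rewrite <- INR_max in *. rewrite minus_INR; [ring|]. apply INR_le. lra.
  - simpl in Hk. assert (Hk' : (k < length g)%nat) by lia.
    rewrite last_reset_cons.
    assert (Edd : dd (tr::g) c (S k) = dd g (if t_rst tr then 0%nat else Nat.max c (g_lower (t_guard tr))) k) by reflexivity.
    rewrite Edd.
    destruct (t_rst tr) eqn:Hrs; try rewrite Hrs in Hrest.
    + destruct (proj1 (run_reset_iff g t1 tms) Hrest) as [tms0 [Hr0 _]].
      assert (IHc := IH 0%nat k (ex_intro _ _ Hr0) Hk').
      assert (EW : forall j, Wd (tr::g) c (S j) = oaddR (Wd (tr::g) c 0) (Wd g 0 j)).
      { intros j. unfold Wd. simpl. rewrite Hrs.
        destruct (option_map INR (g_upper (t_guard tr))), (upB g j); simpl; auto. f_equal. ring. }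
      rewrite EW, IHc.
      destruct (last_reset g k) as [j|] eqn:Hj.
      * pose proof (last_reset_range _ _ _ Hj). destruct j as [|j]; [lia|].
        replace (S (S j) - 1)%nat with (S j) by lia. rewrite EW.
        replace (S j - 1)%nat with j by lia.
        destruct (Wd (tr::g) c 0), (Wd g 0 j), (dd g 0 k); simpl; auto. f_equal. ring.
      * simpl. destruct (Wd (tr::g) c 0), (dd g 0 k); simpl; auto. f_equal. ring.
    + assert (Hr' : reach g (INR (Nat.max c (g_lower (t_guard tr))))).
      { exists tms. apply (run_down _ _ t1); auto. rewrite INR_max.
        destruct (guard_bounds _ t1 ltac:(pose proof (pos_INR c); lra) Hg). rmx. }
      assert (EW : forall j, Wd (tr::g) c (S j) = Wd g (Nat.max c (g_lower (t_guard tr))) j).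
      { intros j. unfold Wd. simpl. rewrite Hrs. rewrite INR_max. reflexivity. }
      rewrite EW, (IH _ k Hr' Hk').
      destruct (last_reset g k) as [j|] eqn:Hj; auto.
      pose proof (last_reset_range _ _ _ Hj). destruct j as [|j]; [lia|].
      replace (S (S j) - 1)%nat with (S j) by lia. rewrite EW.
      replace (S j - 1)%nat with j by lia. reflexivity.
Qed.

End Runs.

Theorem proposition1 (Q Sig : Type) (A : eNTA Q Sig)
    (g : list (transition Q Sig)) :
  wf_eNTA A -> is_path A g -> reachable g ->
  (forall i : nat, (1 <= i <= length g)%nat ->
     s_gamma g i = eadd (w_gamma g (i - 1)) (d_gamma g i)) /\
  (forall i : nat, (i <= length g)%nat ->
     w_gamma g i =
       (if Nat.eqb i 0 then Some 0
        else if reset_at g i then s_gamma g i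
        else w_gamma g (i - 1))).
Proof.
  intros _ _ [tms Hr]. unfold is_run_along in Hr.
  assert (Hr0 : reach g (INR 0)) by (exists tms; exact Hr).
  assert (SW : forall j, (1 <= j <= length g)%nat -> s_gamma g j = Wd g 0 (j - 1)).
  { intros j Hj. unfold s_gamma.
    assert (HI := IL_main g (j-1) (INR 0) (Rle_refl _) ltac:(lia) Hr0).
    change (set_width (TT g (INR 0) (j-1)) = Wd g 0 (j - 1)).
    rewrite (IL_width _ _ _ HI). reflexivity. }
  split.
  - intros i Hi. rewrite SW by auto. rewrite (Claim g 0 (i-1) Hr0) by lia.
    unfold w_gamma. destruct (last_reset g (i-1)) as [j|] eqn:Hj; [|reflexivity].
    pose proof (last_reset_range _ _ _ Hj). rewrite SW by lia. reflexivity.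
  - intros i Hi. destruct i as [|i]; [reflexivity|]. unfold w_gamma.
    change (last_reset g (S i)) with (if reset_at g (S i) then Some (S i) else last_reset g i).
    change (Nat.eqb (S i) 0) with false.
    replace (S i - 1)%nat with i by lia.
    destruct (reset_at g (S i)); reflexivity.
Qed.
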